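(* Let $f\colon [0,1]^2\to\mathbb{R}$ be a continuous function which is monotone, i.e. for every $t\in\mathbb{R}$ the level set $\{x\in[0,1]^2 : f(x)=t\}$ is connected. Let $S$ be the critical set of $f$ and $E^*$ the set defined in the context. Then $f$ has the relaxed Sard property, i.e. $f_\#(\mathbf{1}_S\mathcal{L}^2)\perp\mathcal{L}^1$, if and only if $f$ has the weak Sard property, i.e. $f_\#(\mathbf{1}_{S\cap E^*}\mathcal{L}^2)\perp\mathcal{L}^1$.
   Context: $\mathcal{L}^d$ denotes Lebesgue measure on $\mathbb{R}^d$, $\mathcal{H}^1$ the one-dimensional Hausdorff measure, $\mathbf{1}_A$ the indicator function of $A$, $f_\#\mu$ the pushforward (image) of a measure $\mu$ under $f$, and $\mu\perp\nu$ means $\mu$ and $\nu$ are mutually singular. The critical set $S$ of $f$ is the set of all points $x\in[0,1]^2$ at which $f$ is either not differentiable or has $\nabla f(x)=0$. For $t\in\mathbb{R}$ let $E_t=f^{-1}(t)$ and let $E_t^*$ be the union of all connected components of $E_t$ with strictly positive $\mathcal{H}^1$-measure; $E^*:=\bigcup_{t\in\mathbb{R}}E_t^*$ (a Borel set since $f$ is continuous). *)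

(* Defs.v *)
From HB Require Import structures.
From mathcomp Require Import all_boot all_order all_algebra.
From mathcomp Require Import all_classical all_reals all_analysis.
Set Implicit Arguments.
Unset Strict Implicit.
Unset Printing Implicit Defensive.
Import Order.TTheory GRing.Theory Num.Theory.
Import numFieldNormedType.Exports.
Local Open Scope classical_set_scope.
Local Open Scope ring_scope.

Section Defs.
Variable R : realType.
Implicit Types (A C : set (R * R)) (f : R * R -> R).

Definition square : set (R * R) :=
  [set p | (0 <= p.1 <= 1) /\ (0 <= p.2 <= 1)].

Definition leb2 : set (R * R) -> \bar R :=
  ((@lebesgue_measure R) \x (@lebesgue_measure R))%E.

Definition edist (p q : R * R) : R :=
  Num.sqrt ((p.1 - q.1) ^+ 2 + (p.2 - q.2) ^+ 2).

(** Euclidean diameter (0 for the empty set, +oo for unbounded sets). *)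
Definition ediam C : \bar R :=
  ereal_sup ([set 0%E] `|` [set (edist p q)%:E | p in C & q in C]).

Definition hausdorff1_delta (delta : R) A : \bar R :=
  ereal_inf [set (\sum_(0 <= i <oo) ediam (Cs i))%E |
             Cs in [set Cs : nat -> set (R * R) |
                    A `<=` \bigcup_i Cs i /\
                    forall i, (ediam (Cs i) <= delta%:E)%E]].

Definition hausdorff1 A : \bar R :=
  ereal_sup [set hausdorff1_delta delta A | delta in [set d : R | 0 < d]].

Definition monotone_fun f : Prop :=
  forall t : R, connected [set x | square x /\ f x = t].

Definition critical_set f : set (R * R) :=
  [set x | square x /\
           (~ differentiable f x \/ ('d f x : R * R -> R) = (fun=> 0))].

Definition level_set f (t : R) : set (R * R) := [set x | square x /\ f x = t].

Definition level_set_star f (t : R) : set (R * R) :=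
  \bigcup_(x in [set x | level_set f t x /\
                   (0 < hausdorff1 (connected_component (level_set f t) x))%E])
     connected_component (level_set f t) x.

Definition E_star f : set (R * R) := \bigcup_(t in [set: R]) level_set_star f t.

(** The pushforward f_#(1_A L^2) is singular w.r.t. L^1: there is a Borel
    set N with L^1(N) = 0 carrying the whole measure, i.e.
    (f_#(1_A L^2))(R \ N) = L^2(A ∩ f^{-1}(R \ N)) = 0. *)
Definition pushforward_restr_singular f (A : set (R * R)) : Prop :=
  exists N : set R, [/\ measurable N, (@lebesgue_measure R) N = 0%E &
                        leb2 (A `&` f @^-1` (~` N)) = 0%E].

Definition relaxed_sard f : Prop := pushforward_restr_singular f (critical_set f).
Definition weak_sard f : Prop :=
  pushforward_restr_singular f (critical_set f `&` E_star f).

End Defs.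

(* Main.v *)
Require Import Defs.
From HB Require Import structures.
From mathcomp Require Import all_boot all_order all_algebra.
From mathcomp Require Import all_classical all_reals all_analysis.
From mathcomp Require Import ring lra.
Import Order.TTheory GRing.Theory Num.Theory.
Import numFieldNormedType.Exports.
Local Open Scope classical_set_scope.
Local Open Scope ring_scope.
Section H1.
Variable R : realType.
Local Notation lam := (@lebesgue_measure R).

Lemma lam_mono (A B : set R) : A `<=` B -> (lam A <= lam B)%E.
Proof. move=> AB; exact: (le_mu_ext (wlength idfun) AB). Qed.
Lemma lam_ge0 (A : set R) : (0 <= lam A)%E.
Proof. exact: (mu_ext_ge0 (measure_ge0 (wlength idfun)) A). Qed.

Lemma ediam_ge0 (C : set (R * R)) : (0 <= ediam C)%E.
Proof. by apply: ereal_sup_ubound; left. Qed.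

Lemma edist_ediam (C : set (R * R)) (u v : R * R) : C u -> C v -> ((Defs.edist u v)%:E <= ediam C)%E.
Proof. by move=> Cu Cv; apply: ereal_sup_ubound; right; exists u => //; exists v. Qed.

Lemma fst_edist (u v : R * R) : `|u.1 - v.1| <= Defs.edist u v.
Proof.
rewrite /Defs.edist -sqrtr_sqr ler_sqrt; last by rewrite addr_ge0 // sqr_ge0.
by rewrite lerDl sqr_ge0.
Qed.

Lemma snd_edist (u v : R * R) : `|u.2 - v.2| <= Defs.edist u v.
Proof.
rewrite /Defs.edist -sqrtr_sqr ler_sqrt; last by rewrite addr_ge0 // sqr_ge0.
by rewrite lerDr sqr_ge0.
Qed.

Lemma lam_proj (pi : R * R -> R) (D : set (R * R)) :
  (forall u v, `|pi u - pi v| <= Defs.edist u v) ->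
  (lam (pi @` D) <= ediam D + ediam D)%E.
Proof.
move=> hpi.
have [[d0 Dd0]|/set0P/negP/negPn/eqP D0] := pselect (D !=set0); last first.
  by rewrite D0 image_set0 measure0 adde_ge0 // ediam_ge0.
have : (0 <= ediam D)%E by exact: ediam_ge0.
case E : (ediam D) => [r| |] // r0; last by rewrite /= leey.
apply: (@le_trans _ _ (lam `[pi d0 - r, pi d0 + r]%classic)).
  apply: lam_mono => _ [y Dy <-] /=; rewrite in_itv /=.
  have := @edist_ediam D y d0 Dy Dd0; rewrite E lee_fin => h.
  have := le_trans (hpi y d0) h; rewrite ler_norml => /andP[h1 h2].
  by apply/andP; split; rewrite -?lerBlDl; [rewrite lerBlDr -lerBlDl|]; lra.
rewrite lebesgue_measure_itv /=; case: ifP => _; last by rewrite -EFinD lee_fin; move: r0; rewrite lee_fin; lra.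
by rewrite -EFinD lee_fin; lra.
Qed.


Lemma lam_sigma (F : nat -> set R) :
  (lam (\bigcup_n F n) <= \sum_(0 <= i <oo) lam (F i))%E.
Proof. exact: (@mu_ext_sigma_subadditive _ _ _ (wlength idfun) (measure_ge0 _) F). Qed.

Lemma H1_pos_pi (pi : R * R -> R) (C : set (R * R)) a b :
  continuous pi -> (forall u v, `|pi u - pi v| <= Defs.edist u v) ->
  connected C -> C a -> C b -> pi a < pi b -> (0 < hausdorff1 C)%E.
Proof.
move=> pic hpi cC Ca Cb ab.
have Iint : is_interval (pi @` C).
  apply/connected_intervalP; apply: connected_continuous_connected => //.
  exact: continuous_subspaceT.
have sub : `[pi a, pi b]%classic `<=` pi @` C.
  move=> z; rewrite /= in_itv /= => hz.
  by apply: (Iint (pi a) (pi b)); [exists a|exists b|].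
apply: (@lt_le_trans _ _ (((pi b - pi a) / 2)%:E)).
  by rewrite lte_fin divr_gt0 // subr_gt0.
apply: (@le_trans _ _ (hausdorff1_delta 1 C)); last first.
  by apply: ereal_sup_ubound; exists 1 => //; exact: ltr01.
apply: le_ereal_inf_tmp => _ [Cs [cov _] <-].
set S := (\sum_(0 <= i <oo) ediam (Cs i))%E.
have S0 : (0 <= S)%E by apply: nneseries_ge0 => i _ _; exact: ediam_ge0.
have key : ((pi b - pi a)%:E <= S + S)%E.
  have -> : ((pi b - pi a)%:E = lam `[pi a, pi b]%classic).
    by rewrite lebesgue_measure_itv /= lte_fin ab -EFinD.
  apply: (@le_trans _ _ (lam (\bigcup_i (pi @` Cs i)))).
    apply: lam_mono => z /sub [c Cc <-].
    by have [i _ Ci] := cov c Cc; exists i => //; exists c.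
  apply: le_trans (lam_sigma _) _.
  rewrite /S -nneseriesD; last 2 first.
    by move=> i _ _; exact: ediam_ge0.
    by move=> i _ _; exact: ediam_ge0.
  apply: lee_nneseries; first by move=> i _ _; exact: lam_ge0.
  move=> n _; exact: (@lam_proj pi (Cs n) hpi).
move: S0 key; case: S => [r| |]; last by [].
  by rewrite -EFinD !lee_fin => r0 h; lra.
by move=> *; exact: leey.
Qed.

End H1.

Section Meas.
Variable R : realType.
Local Notation lam := (@lebesgue_measure R).


Lemma lam_U2 (A B : set R) : (lam (A `|` B) <= lam A + lam B)%E.
Proof. exact: (outer_measureU2 (mu_ext (wlength idfun)) A B). Qed.


Lemma lam_Unull (A B : set R) : lam B = 0%E -> (lam (A `|` B) <= lam A)%E.
Proof. move=> B0; apply: le_trans (lam_U2 A B) _; by rewrite B0 adde0. Qed.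

Lemma lam_subsingleton (A : set R) : (forall x y, A x -> A y -> x = y) -> lam A = 0%E.
Proof.
move=> h; have [[a Aa]|/set0P/negP/negPn/eqP ->] := pselect (A !=set0).
  apply/eqP; rewrite eq_le lam_ge0 andbT -(lebesgue_measure_set1 a).
  by apply: lam_mono => x Ax; exact: h.
by rewrite measure0.
Qed.

Lemma int_mono (F G : R -> \bar R) : (forall x, (0 <= F x)%E) -> (forall x, (F x <= G x)%E) ->
  (\int[lam]_x F x <= \int[lam]_x G x)%E.
Proof.
move=> F0 FG.
have G0 : forall x, (0 <= G x)%E by move=> x; exact: le_trans (F0 x) (FG x).
rewrite ge0_integralE; last by move=> x _; exact: F0.
rewrite ge0_integralE; last by move=> x _; exact: G0.
apply: le_ereal_sup => _ [h hF <-]; exists h => // x.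
apply: le_trans (hF x) _.
by rewrite /patch; case: ifP.
Qed.

Lemma leb2_ge0 (A : set (R * R)) : (0 <= leb2 A)%E.
Proof. by apply: integral_ge0 => x _; exact: lam_ge0. Qed.

Lemma leb2_sec (A B : set (R * R)) : (forall a, (lam (xsection A a) <= lam (xsection B a))%E) ->
  (leb2 A <= leb2 B)%E.
Proof. move=> h; apply: int_mono => x /=; [exact: lam_ge0| exact: h]. Qed.

End Meas.

Section Sign.
Variable R : realType.
Lemma pair_cont (c : R) : continuous (fun s : R => (s, c)).
Proof. move=> s. have := (@cvg_pair _ _ _ (nbhs s) (nbhs s) (nbhs c) _ _ _ id (fun=> c) cvg_id (cvg_cst c)). exact. Qed.
Lemma pair_cont2 (c : R) : continuous (fun s : R => (c, s)).
Proof. move=> s. have := (@cvg_pair _ _ _ (nbhs s) (nbhs c) (nbhs s) _ _ _ (fun=> c) id (cvg_cst c) cvg_id). exact. Qed.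
Lemma fst_cont : continuous (@fst R R).
Proof. move=> [a b]; have := (@cvg_fst _ _ (nbhs a) (nbhs b) _). exact. Qed.
Lemma snd_cont : continuous (@snd R R).
Proof. move=> [a b]; have := (@cvg_snd _ _ (nbhs a) (nbhs b) _). exact. Qed.

Lemma sameside (phi : R -> R) t : {within `[0, 1], continuous phi} ->
  (forall s, 0 <= s <= 1 -> phi s != t) ->
  forall s1 s2, 0 <= s1 <= 1 -> 0 <= s2 <= 1 -> (phi s1 < t) = (phi s2 < t).
Proof.
move=> pc pt.
suff H : forall s1 s2, s1 <= s2 -> 0 <= s1 <= 1 -> 0 <= s2 <= 1 -> (phi s1 < t) = (phi s2 < t).
  move=> s1 s2 h1 h2; have [le12|le21] := leP s1 s2; first exact: H.
  by apply/esym/H => //; exact: ltW.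
move=> s1 s2 le12 /andP[h1 h1'] /andP[h2 h2'].
have sub : `[s1, s2]%classic `<=` `[0, 1]%classic.
  by move=> z; rewrite /= !in_itv /= => /andP[z1 z2]; apply/andP; split; lra.
have pc' : {within `[s1, s2], continuous phi} := continuous_subspaceW sub pc.
have t1 := pt s1 (ltac:(apply/andP; split; lra)).
have t2 := pt s2 (ltac:(apply/andP; split; lra)).
have contra : forall c, c \in `[s1, s2] -> phi c != t.
  by move=> c; rewrite in_itv /= => /andP[c1 c2]; apply: pt; apply/andP; split; lra.
apply/idP/idP => H1; apply: contraTT isT => H2.
- have H3 : t < phi s2 by rewrite lt_neqAle eq_sym t2 /=; move: H2; rewrite -leNgt.
  have [c cin ct] : exists2 c, c \in `[s1, s2] & phi c = t.
    by apply: IVT => //; rewrite ge_min le_max (ltW H1) (ltW H3) orbT.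
  by move: (contra c cin); rewrite ct eqxx.
- have H3 : t < phi s1 by rewrite lt_neqAle eq_sym t1 /=; move: H2; rewrite -leNgt.
  have [c cin ct] : exists2 c, c \in `[s1, s2] & phi c = t.
    by apply: IVT => //; rewrite ge_min le_max (ltW H1) (ltW H3) orbT.
  by move: (contra c cin); rewrite ct eqxx.
Qed.

Lemma within_comp (T U V : topologicalType) (A : set T) (B : set U) (g : T -> U) (f : U -> V) :
  continuous g -> (forall x, A x -> B (g x)) -> {within B, continuous f} ->
  {within A, continuous (f \o g)}.
Proof.
move=> gc AB /subspace_continuousP fc; apply/subspace_continuousP => x Ax.
apply: (@cvg_comp _ _ _ g f _ (within B (nbhs (g x)))); last exact: fc (AB x Ax).
move=> W /= hW.
have := gc x _ hW.
rewrite /within /= => h.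
have h' : nbhs x [set t | B (g t) -> W (g t)] := h.
change (nbhs x [set t | A t -> W (g t)]).
by apply: filterS h' => t /= h1 h2; exact: h1 (AB t h2).
Qed.

Lemma extremal (f : R * R -> R) (x1 x2 : R) :
  {within @square R, continuous f} -> square (x1, x2) -> 0 < x2 < 1 ->
  (forall y, square y -> f y = f (x1, x2) -> y = (x1, x2)) ->
  (forall y, square y -> y <> (x1, x2) -> f (x1, x2) < f y) \/
  (forall y, square y -> y <> (x1, x2) -> f y < f (x1, x2)).
Proof.
move=> hf [/andP[h1 h1'] /andP[h2 h2']] /andP[x2a x2b] huniq.
set t := f (x1, x2).
have rowc : forall c, 0 <= c <= 1 -> {within `[0, 1], continuous (fun s => f (s, c))}.
  move=> c /andP[c0 c1].
  have := (@within_comp R _ R `[0, 1]%classic (@square R) (fun s => (s, c)) f (pair_cont c)).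
  apply => // s.
  by rewrite /= in_itv /= => hs; split => //=; apply/andP; split.
have colc : forall s, 0 <= s <= 1 -> {within `[0, 1], continuous (fun c => f (s, c))}.
  move=> s /andP[s0 s1].
  have := (@within_comp R _ R `[0, 1]%classic (@square R) (fun c => (s, c)) f (pair_cont2 s)).
  apply => // c.
  by rewrite /= in_itv /= => hc; split => //=; apply/andP; split.
have neq : forall y, square y -> y <> (x1, x2) -> f y != t.
  by move=> y sy yx; apply/eqP => fy; exact: yx (huniq y sy fy).
have rowside : forall c, 0 <= c <= 1 -> c != x2 -> forall s1 s2, 0 <= s1 <= 1 -> 0 <= s2 <= 1 ->
    (f (s1, c) < t) = (f (s2, c) < t).
  move=> c hc cx; apply: sameside; first exact: rowc.
  move=> s hs; apply: neq; first by split.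
  by case=> _ ec; move: cx; rewrite ec eqxx.
have colside : forall s, 0 <= s <= 1 -> s != x1 -> forall c1 c2, 0 <= c1 <= 1 -> 0 <= c2 <= 1 ->
    (f (s, c1) < t) = (f (s, c2) < t).
  move=> s hs sx; apply: sameside; first exact: colc.
  move=> c hc; apply: neq; first by split.
  by case=> es _; move: sx; rewrite es eqxx.
have i00 : 0 <= (0:R) <= 1 by rewrite lexx ler01.
have i11 : 0 <= (1:R) <= 1 by rewrite lexx ler01.
have x20 : (0:R) != x2 by rewrite lt_eqF.
pose c0 : R := if x1 == 0 then 1 else 0.
have c0i : 0 <= c0 <= 1 by rewrite /c0; case: ifP.
have c0x : c0 != x1.
  rewrite /c0; case: ifP => [/eqP -> |/negbT]; last by rewrite eq_sym.
  by rewrite oner_eq0.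
have claim : forall y, square y -> y <> (x1, x2) -> (f y < t) = (f (0, 0) < t).
  move=> [y1 y2] [/= hy1 hy2] yx.
  have [e1|n1] := eqVneq y1 x1.
    have n2 : y2 != x2 by apply/eqP => e2; apply: yx; rewrite e1 e2.
    rewrite (rowside y2 hy2 n2 y1 c0) // (colside c0 c0i c0x y2 0) //.
    exact: (rowside 0 i00 x20).
  rewrite (colside y1 hy1 n1 y2 0) //; exact: (rowside 0 i00 x20).
case b : (f (0, 0) < t).
  by right => y sy yx; rewrite claim.
left => y sy yx; have := claim y sy yx; rewrite b => /negbT; rewrite -leNgt le_eqVlt.
by rewrite eq_sym (negbTE (neq y sy yx)).
Qed.
End Sign.


Section Main.
Variable R : realType.
Local Notation lam := (@lebesgue_measure R).

Lemma H1_pos (C : set (R * R)) p q : connected C -> C p -> C q -> p <> q ->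
  (0 < hausdorff1 C)%E.
Proof.
move=> cC Cp Cq pq.
have [lt1|gt1|e1] := ltgtP p.1 q.1.
- exact: (@H1_pos_pi R fst C p q (@fst_cont R) (@fst_edist R) cC Cp Cq lt1).
- exact: (@H1_pos_pi R fst C q p (@fst_cont R) (@fst_edist R) cC Cq Cp gt1).
have [lt2|gt2|e2] := ltgtP p.2 q.2.
- exact: (@H1_pos_pi R snd C p q (@snd_cont R) (@snd_edist R) cC Cp Cq lt2).
- exact: (@H1_pos_pi R snd C q p (@snd_cont R) (@snd_edist R) cC Cq Cp gt2).
by exfalso; apply: pq; move: e1 e2; clear; case: p => ? ?; case: q => ? ? /= -> ->.
Qed.

Lemma xsec_sub (A B : set (R * R)) a : A `<=` B -> xsection A a `<=` xsection B a.
Proof. by move=> AB y; rewrite /xsection /= !inE; exact: AB. Qed.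

Lemma lamU0 (A B : set R) : lam A = 0%E -> lam B = 0%E -> lam (A `|` B) = 0%E.
Proof.
move=> A0 B0; apply/eqP; rewrite eq_le lam_ge0 andbT.
by apply: le_trans (@lam_U2 R A B) _; rewrite A0 B0 adde0.
Qed.

End Main.

Theorem theorem1 (R : realType) (f : R * R -> R) :
  {within @square R, continuous f} ->
  monotone_fun f ->
  (relaxed_sard f <-> weak_sard f).
Proof.
move=> hf hm; split.
  move=> [N [mN N0 h]]; exists N; split => //.
  apply/eqP; rewrite eq_le leb2_ge0 andbT -h; apply: leb2_sec => a.
  apply: lam_mono; apply: xsec_sub => z [[Sz _] Nz]; by split.
move=> [N [mN N0 h]]; exists N; split => //.
apply/eqP; rewrite eq_le leb2_ge0 andbT -h; apply: leb2_sec => a.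
pose M1 := [set z : R * R | square z /\ forall y, square y -> y <> z -> f z < f y].
pose M2 := [set z : R * R | square z /\ forall y, square y -> y <> z -> f y < f z].
pose Z := [set (0:R)] `|` [set (1:R)] `|` xsection M1 a `|` xsection M2 a.
have sub1 : forall M : set (R * R), (forall z w, M z -> M w -> z <> w -> False) ->
    lebesgue_measure (xsection M a) = 0%E.
  move=> M hM; apply: lam_subsingleton => y1 y2; rewrite /xsection /= !inE => m1 m2.
  apply/eqP; apply/negP => /negP n12; apply: (hM _ _ m1 m2).
  by case=> e; move: n12; rewrite e eqxx.
have Z0 : lebesgue_measure Z = 0%E.
  rewrite /Z; apply: lamU0; [apply: lamU0; [apply: lamU0|]|].
  - exact: lebesgue_measure_set1.
  - exact: lebesgue_measure_set1.
  - apply: sub1 => z w [sz hz] [sw hw] zw.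
    have := hz w sw (nesym zw); have := hw z sz zw => h1 h2.
    by move: (lt_trans h1 h2); rewrite ltxx.
  - apply: sub1 => z w [sz hz] [sw hw] zw.
    have := hz w sw (nesym zw); have := hw z sz zw => h1 h2.
    by move: (lt_trans h1 h2); rewrite ltxx.
suff sub : xsection (critical_set f `&` f @^-1` (~` N)) a `<=` xsection (critical_set f `&` E_star f `&` f @^-1` (~` N)) a `|` Z.
  exact: le_trans (@lam_mono R _ _ sub) (@lam_Unull R _ _ Z0).
move=> y; rewrite /xsection /= inE => -[Sy Ny].
have [E|nE] := pselect (E_star f (a, y)).
  by left; rewrite inE; split.
right.
have [sq _] := Sy.
have [y0|y0] := pselect (y = 0); first by left; left; left.
have [y1|y1] := pselect (y = 1); first by left; left; right.
have yi : 0 < y < 1.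
  move: sq => [_ /= /andP[ya yb]].
  rewrite !lt_neqAle ya yb !andbT; apply/andP; split; apply/eqP => e.
    by apply: y0.
  by apply: y1.
have uniq : forall z, square z -> f z = f (a, y) -> z = (a, y).
  move=> z sz fz; apply: contrapT => zn; apply: nE.
  have cL : connected (level_set f (f (a, y))) := hm (f (a, y)).
  have La : level_set f (f (a, y)) (a, y) by split.
  have Lz : level_set f (f (a, y)) z by split.
  have H1p := @H1_pos R _ _ _ cL Lz La zn.
  exists (f (a, y)) => //; exists (a, y); last first.
    by rewrite (connected_component_id La cL).
  by split => //; rewrite (connected_component_id La cL).
have [hmin|hmax] := @extremal R f a y hf sq yi uniq.
  by left; right; rewrite /xsection /= inE; split.
by right; rewrite /xsection /= inE; split.
Qed.
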